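(* Let $\lambda \geq 2$ be an integer and let $H$ be a graph with $\lambda^2+2$ vertices having at least one isolated vertex. Then $\lambda_{\min}(\mathfrak{q}(H)) < -\lambda$.
   Context: A Hoffman graph is a graph whose vertices are labelled ''fat'' or ''slim'', such that fat vertices are pairwise non-adjacent and each fat vertex has at least one slim neighbour. If $A_s$ is the adjacency matrix of the subgraph induced on the slim vertices and $C$ is the slim-by-fat adjacency matrix, the special matrix is $S = A_s - CC^T$, and the eigenvalues of the Hoffman graph are those of $S$; $\lambda_{\min}$ denotes the smallest one. For a graph $H$, $\mathfrak{q}(H)$ is the Hoffman graph whose slim vertices induce $H$ and which has a single fat vertex adjacent to all vertices of $H$ (so its special matrix is $A(H) - J$, with $J$ the all-ones matrix). *)

(* Defs.v *)
From mathcomp Require Import all_boot all_order all_algebra.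
From mathcomp Require Import reals.
Set Implicit Arguments. Unset Strict Implicit. Unset Printing Implicit Defensive.
Import Order.TTheory GRing.Theory Num.Theory.
Local Open Scope ring_scope.

Definition simple_graph (n : nat) (e : rel 'I_n) : Prop :=
  (forall i, ~~ e i i) /\ (forall i j, e i j = e j i).

Definition isolated (n : nat) (e : rel 'I_n) (v : 'I_n) : Prop :=
  forall u, ~~ e v u.

Definition adjmx (R : nzRingType) (n : nat) (e : rel 'I_n) : 'M[R]_n :=
  \matrix_(i, j) (e i j)%:R.

(* special matrix of the Hoffman graph q(H): A(H) - J *)
Definition q_special (R : nzRingType) (n : nat) (e : rel 'I_n) : 'M[R]_n :=
  adjmx R e - const_mx 1.

Definition is_lambda_min (R : realType) (n : nat) (S : 'M[R]_n) (m : R) : Prop :=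
  eigenvalue S m /\ (forall a, eigenvalue S a -> m <= a).

(* Main.v *)
Require Import Defs.
From mathcomp Require Import all_boot all_order all_algebra.
From mathcomp Require Import reals.
From mathcomp Require Import complex polyrcf.
From mathcomp Require Import lra ring.
Import Order.TTheory GRing.Theory Num.Theory.
Local Open Scope ring_scope.

Section Key.
Local Open Scope sesquilinear_scope.
Lemma key (R : rcfType) n (M : 'M[R]_n) (x : 'rV[R]_n) (c : R) :
  M^T = M -> (x *m M *m x^T) 0 0 < c * (x *m x^T) 0 0 ->
  exists a, eigenvalue M a /\ a < c.
Proof.
move=> Msym hlt.
pose f := real_complex R.
pose MC := M ^ f.
have MCsym : MC \is symmetricmx.
  apply/is_hermitianmxP; rewrite expr0 scale1r map_mx_id //.
  by rewrite /MC map_trmx Msym.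
have MCreal : MC \is a mxOver Num.real.
  by apply/mxOverP => i j; rewrite mxE; apply/complex_realP; exists (M i j).
have herm := realsym_hermsym MCsym MCreal.
have /orthomx_spectralP eqA := hermitian_normalmx herm.
move: eqA.
set P := spectralmx MC; set d := spectral_diag MC => eqA.
have dreal := hermitian_spectral_diag_real herm.
have Pu : P \is unitarymx := spectral_unitarymx MC.
have PPt : P *m P^t* = 1%:M by apply/unitarymxP.
have invP : invmx P = P^t* by apply: invmx_unitary.
have PtP : P^t* *m P = 1%:M by rewrite -invP mulVmx // spectral_unit.
have [i di] : exists i, d 0 i < f c.
  suff : [exists i, d 0 i < f c] by move/existsP.
  apply: contraT; rewrite negb_exists => /forallP hall.
  have fcreal : f c \is Num.real by apply/complex_realP; exists c.
  have hge : forall i, f c <= d 0 i.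
    move=> i; rewrite real_leNgt ?hall //; exact: (mxOverP dreal).
  pose xC := x ^ f; pose y := xC *m P^t*.
  have E1 : xC^t* = (x^T) ^ f.
    apply/matrixP => a b; rewrite !mxE conj_Creal //.
    by apply/complex_realP; eexists.
  have E2 : map_mx f (x *m M *m x^T) = y *m diag_mx d *m y^t*.
    rewrite !map_mxM -E1 -/MC eqA invP /y trmx_mul map_mxM trmxCK.
    by rewrite !mulmxA.
  have E3 : map_mx f (x *m x^T) = y *m y^t*.
    rewrite !map_mxM -E1 /y trmx_mul map_mxM trmxCK.
    by rewrite mulmxA -(mulmxA xC) PtP mulmx1.
  have S2 : (y *m diag_mx d *m y^t*) 0 0 = \sum_k d 0 k * (y 0 k * (y 0 k)^*).
    rewrite mxE; apply: eq_bigr => k _; rewrite mul_mx_diag !mxE.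
    by rewrite mulrAC mulrC.
  have S3 : (y *m y^t*) 0 0 = \sum_k (y 0 k * (y 0 k)^*).
    by rewrite mxE; apply: eq_bigr => k _; rewrite !mxE.
  have : (map_mx f (x *m M *m x^T)) 0 0 < f c * (map_mx f (x *m x^T)) 0 0.
    have e : forall A : 'M[R]_1, (map_mx f A) 0 0 = f (A 0 0) by move=> A; rewrite mxE.
    by rewrite !e /f -rmorphM ltcR.
  rewrite E2 E3 S2 S3 mulr_sumr => h; rewrite -(lt_geF h).
  apply: ler_sum => k _; apply: ler_wpM2r; last exact: hge.
  exact: mul_conjC_ge0.
have /complex_realP [r dr] : d 0 i \is Num.real by apply: (mxOverP dreal).
exists r; split; last by move: di; rewrite dr /f ltcR.
rewrite -(eigenvalue_map f).
suff h : eigenvalue MC (d 0 i) by move: h; rewrite dr; exact.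
apply/eigenvalueP; exists (row i P).
  rewrite -row_mul eqA invP !mulmxA PPt mul1mx row_mul row_diag_mx.
  by rewrite -scalemxAl -rowE.
apply/eqP => h0.
have : row i (P *m P^t*) = 0 by rewrite row_mul h0 mul0mx.
rewrite PPt => /rowP /(_ i); rewrite !mxE eqxx /=.
by move/eqP; rewrite oner_eq0.
Qed.
End Key.
Lemma seq_min (R : realDomainType) (s : seq R) (a : R) :
  exists m, (m = a \/ m \in s) /\ m <= a /\ forall y, y \in s -> m <= y.
Proof.
elim: s => [|b s [m [hm [hma hms]]]]; first by exists a; split; [left|split].
have [hbm|hmb] := lerP b m.
  exists b; split; first by right; rewrite inE eqxx.
  split; first exact: le_trans hbm hma.
  move=> y; rewrite inE => /orP [/eqP ->//|/hms]; exact: le_trans.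
exists m; split.
  by case: hm => [->|h]; [left|right; rewrite inE h orbT].
split => // y; rewrite inE => /orP [/eqP ->|/hms //]; exact: ltW.
Qed.

Lemma min_eig (R : rcfType) n (M : 'M[R]_n) a : eigenvalue M a ->
  exists m, eigenvalue M m /\ m <= a /\ forall b, eigenvalue M b -> m <= b.
Proof.
move=> ea.
have pnz : char_poly M != 0 by apply: monic_neq0; apply: char_poly_monic.
have ro := roots_on_rootsR pnz.
have [m [hm [hma hms]]] := @seq_min R (rootsR (char_poly M)) a.
exists m; split; last split => //.
  case: hm => [->//|hm]; rewrite eigenvalue_root_char.
  by move: (ro m); rewrite hm => /andP [].
move=> b; rewrite eigenvalue_root_char => rb; apply: hms.
by rewrite -ro rb andbT.
Qed.

Theorem mainTheorem3 (R : realType) (lam : nat) (e : rel 'I_(lam ^ 2 + 2))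
  (hlam : (2 <= lam)%N) (hH : simple_graph e)
  (hiso : exists v, isolated e v) :
  exists m : R, is_lambda_min (q_special R e) m /\ m < - (lam%:R).
Proof.
have [v hv] := hiso; case: hH => hirr hsym.
set S := q_special R e.
have Ssym : S^T = S by apply/matrixP => i j; rewrite !mxE hsym.
pose y (i : 'I_(lam ^ 2 + 2)) : R := (i != v)%:R.
pose x : 'rV[R]_(lam ^ 2 + 2) := \row_j (if j == v then lam%:R else 1).
have quad : forall A : 'M[R]_(lam ^ 2 + 2),
    (x *m A *m x^T) 0 0 = \sum_j \sum_i x 0 i * A i j * x 0 j.
  move=> A; rewrite mxE; apply: eq_bigr => j _; rewrite mxE mulr_suml.
  by apply: eq_bigr => i _; rewrite !mxE.
have [a [ea alt]] : exists a, eigenvalue S a /\ a < - lam%:R.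
  apply: (@key R _ S x (- lam%:R) Ssym).
  rewrite quad.
  have xx : (x *m x^T) 0 0 = \sum_j x 0 j * x 0 j.
    by rewrite mxE; apply: eq_bigr => j _; rewrite [x^T j 0]mxE.
  have hv' : forall u, e u v = false by move=> u; rewrite hsym; apply/negbTE/hv.
  have hv2 : forall u, e v u = false by move=> u; apply/negbTE/hv.
  have Eab : forall a b : R, a = b -> a <= b by move=> a0 b0 ->.
  have term : forall i j, x 0 i * S i j * x 0 j <= y i * y j - x 0 i * x 0 j.
    move=> i j; rewrite /S /q_special /adjmx /y !mxE.
    case: (eqVneq i v) => [->|iv]; case: (eqVneq j v) => [->|jv] //=;
      rewrite ?hv' ?hv2 /=.
    - by apply: Eab; ring.
    - by apply: Eab; ring.
    - by apply: Eab; ring.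
    - case: (e i j) => /=; first by apply: Eab; ring.
      by rewrite mul1r mulr1 subrr sub0r oppr_le0 ler01.
  have sy : \sum_i y i = (lam ^ 2 + 1)%:R.
    rewrite (bigD1 v) //= /y eqxx add0r.
    rewrite (eq_bigr (fun _ => 1)); last by move=> i /negbTE ->.
    by rewrite sumr_const cardC1 card_ord addn2 addn1.
  have sx : \sum_i x 0 i = lam%:R + (lam ^ 2 + 1)%:R.
    rewrite (bigD1 v) //= mxE eqxx; congr (_ + _).
    rewrite (eq_bigr (fun _ => 1)); last by move=> i /negbTE hi; rewrite mxE hi.
    by rewrite sumr_const cardC1 card_ord addn2 addn1.
  have sxx : \sum_i x 0 i * x 0 i = lam%:R ^+ 2 + (lam ^ 2 + 1)%:R.
    rewrite (bigD1 v) //= mxE eqxx; congr (_ + _).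
    rewrite (eq_bigr (fun _ => 1)); last by move=> i /negbTE hi; rewrite mxE hi mulr1.
    by rewrite sumr_const cardC1 card_ord addn2 addn1.
  have bound : \sum_j \sum_i x 0 i * S i j * x 0 j <=
      (\sum_i y i) * (\sum_i y i) - (\sum_i x 0 i) * (\sum_i x 0 i).
    have -> : (\sum_i y i) * (\sum_i y i) - (\sum_i x 0 i) * (\sum_i x 0 i)
        = \sum_j \sum_i (y i * y j - x 0 i * x 0 j).
      rewrite mulr_sumr mulr_sumr -sumrB; apply: eq_bigr => j _.
      by rewrite mulr_suml mulr_suml -sumrB.
    apply: ler_sum => j _; apply: ler_sum => i _; exact: (term i j).
  apply: (le_lt_trans bound); rewrite xx sy sx sxx.
  have hl : (2 : R) <= lam%:R by rewrite (ler_nat R 2 lam).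
  rewrite !natrD natrX.
  set L := lam%:R.
  have L0 : 0 < L by apply: lt_le_trans hl.
  rewrite -subr_gt0 (_ : _ - _ = L * L + L); last by rewrite /L; ring.
  by apply: addr_gt0 => //; apply: mulr_gt0.
have [m [em [ma mmin]]] := @min_eig R _ S a ea.
exists m; split; first by split.
exact: le_lt_trans ma alt.
Qed.
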